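(* Let $p(y,z|x)$ be a discrete memoryless broadcast channel with input alphabet $\mathcal{X}=\{0,1,\dots,m-1\}$. Let $U,V,X$ be random variables with $U,V$ on finite sets $\mathcal{U},\mathcal{V}$ and $X$ on $\mathcal{X}$, and let $(Y,Z)$ be obtained from $X$ through the channel, so that $(U,V)\to X\to(Y,Z)$ is a Markov chain. Define $U^*$ on $\mathcal{U}\times\{0,\dots,m-1\}$, $V^*$ on $\mathcal{V}\times\{0,\dots,m-1\}$, $X^*$ on $\mathcal{X}$ (writing $u_i=(u,i)$, $v_j=(v,j)$) by $P(U^*=u_i,V^*=v_j)=\frac1m P(U=u,V=v,X=(i-j)_m)$ and $X^*=(i-j)_m$ when $(U^*,V^* )=(u_i,v_j)$, where $(l)_m$ is the remainder of $l$ modulo $m$; and let $(Y^*,Z^* )$ be obtained from $X^*$ through the same channel, so $(U^*,V^* )\to X^*\to(Y^*,Z^* )$ is a Markov chain with $p(y^*,z^*|x^* )=p(y,z|x)$. Then: (i) $P(X^*=i)=P(X=i)$ for $0\le i\le m-1$; (ii) $H(Y^*|U^* )=H(Y|U)$; (iii) $H(Z^*|U^* )=H(Z|U)$; (iv) $H(Y^*|V^* )=H(Y|V)$; (v) $H(Z^*|V^* )=H(Z|V)$; (vi) $H(Y^*|U^*,V^* )=H(Y^*|X^* )=H(Y|X)\le H(Y|U,V)$; (vii) $H(Z^*|U^*,V^* )=H(Z^*|X^* )=H(Z|X)\le H(Z|U,V)$. *)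

(* Defs.v *)
From HB Require Import structures.
From mathcomp Require Import all_boot all_order all_algebra.
From mathcomp Require Import all_classical all_reals all_analysis.
Set Implicit Arguments. Unset Strict Implicit. Unset Printing Implicit Defensive.
Import Order.TTheory GRing.Theory Num.Theory.
Local Open Scope ring_scope.

Section Defs.
Variable R : realType.

Definition prob (Om : finType) (P : Om -> R) (E : pred Om) : R :=
  \sum_(w | E w) P w.

Definition condH (Om : finType) (P : Om -> R) (TA TB : finType)
    (A : Om -> TA) (B : Om -> TB) : R :=
  - \sum_(a : TA) \sum_(b : TB)
      let pab := prob P (fun w => (A w == a) && (B w == b)) in
      if pab == 0 then 0
      else pab * ln (pab / prob P (fun w => B w == b)).

Definition subm (m : nat) (i j : 'I_m) : 'I_m :=
  Ordinal (ltn_pmod (i + m - j) (leq_ltn_trans (leq0n i) (ltn_ord i))).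

Definition orig_pmf (U V Y Z : finType) (m : nat)
    (pUVX : U -> V -> 'I_m -> R) (W : 'I_m -> Y -> Z -> R)
    (w : U * V * 'I_m * Y * Z) : R :=
  match w with (u, v, x, y, z) => pUVX u v x * W x y z end.

(* Starred sample space: (Us,Vs,Xs,Ys,Zs) with Us = (u,i), Vs = (v,j),
   P(Us=u_i,Vs=v_j) = 1/m P(U=u,V=v,X=(i-j)_m), Xs = (i-j)_m, and
   (Ys,Zs) drawn from Xs through the same channel W. *)
Definition star_pmf (U V Y Z : finType) (m : nat)
    (pUVX : U -> V -> 'I_m -> R) (W : 'I_m -> Y -> Z -> R)
    (w : (U * 'I_m) * (V * 'I_m) * 'I_m * Y * Z) : R :=
  match w with ((u, i), (v, j), x, y, z) =>
  (m%:R)^-1 * pUVX u v (subm i j) * (if x == subm i j then 1 else 0) * W x y z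
  end.

End Defs.

(* Main.v *)
Require Import Defs.
From HB Require Import structures.
From mathcomp Require Import all_boot all_order all_algebra.
From mathcomp Require Import all_classical all_reals all_analysis.
From mathcomp Require Import ring.
Import Order.TTheory GRing.Theory Num.Theory.
Set Implicit Arguments. Unset Strict Implicit.
Local Open Scope ring_scope.

Section Gen.
Variable R : realType.

Lemma sum_only (T : finType) (a0 : T) (F : T -> R) :
  (forall a, a != a0 -> F a = 0) -> \sum_a F a = F a0.
Proof. by move=> H; rewrite (bigD1 a0) //= big1 ?addr0. Qed.

Lemma sum_ind (T : finType) (a0 : T) (F : T -> R) :
  \sum_a F a * (a == a0)%:R = F a0.
Proof.
rewrite (sum_only (a0:=a0)) ?eqxx ?mulr1 // => a /negbTE ->; by rewrite mulr0.
Qed.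

Lemma sum_pair (A B : finType) (F : A * B -> R) :
  \sum_p F p = \sum_a \sum_b F (a, b).
Proof. by rewrite (pair_bigA _ (fun a b => F (a, b))); apply: eq_bigr => -[]. Qed.

Lemma probE (Om : finType) (P : Om -> R) (E : pred Om) :
  prob P E = \sum_w P w * (E w)%:R.
Proof.
rewrite /prob big_mkcond; apply: eq_bigr => w _.
by case: (E w); rewrite ?mulr1 ?mulr0.
Qed.

Lemma marg (Om TA TB : finType) (P : Om -> R) (A : Om -> TA) (B : Om -> TB) b :
  prob P (fun w => B w == b) =
  \sum_a prob P (fun w => (A w == a) && (B w == b)).
Proof.
rewrite /prob (partition_big A xpredT) //=; apply: eq_bigr => a _.
by apply: eq_bigl => w; rewrite andbC.
Qed.

Definition Hj (TA TB : finType) (J : TA -> TB -> R) : R :=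
  - \sum_a \sum_b J a b * ln (J a b / \sum_a' J a' b).

Lemma condH_Hj (Om TA TB : finType) (P : Om -> R) (A : Om -> TA) (B : Om -> TB) :
  condH P A B = Hj (fun a b => prob P (fun w => (A w == a) && (B w == b))).
Proof.
rewrite /condH /Hj; congr (- _); apply: eq_bigr => a _; apply: eq_bigr => b _ /=.
rewrite (marg P A B b).
by case: eqP => [->|]; rewrite ?mul0r.
Qed.

Lemma Hj_scale (TA TB : finType) (m : nat) (J : TA -> TB -> R)
  (J' : TA -> TB * 'I_m -> R) : (0 < m)%N ->
  (forall a b i, J' a (b, i) = m%:R^-1 * J a b) -> Hj J' = Hj J.
Proof.
move=> m0 HJ; rewrite /Hj; congr (- _); apply: eq_bigr => a _.
rewrite sum_pair; apply: eq_bigr => b _.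
have mn0 : (m%:R : R) != 0 by rewrite pnatr_eq0 -lt0n.
transitivity (\sum_(i < m) m%:R^-1 * (J a b * ln (J a b / \sum_a' J a' b))).
  apply: eq_bigr => i _; rewrite HJ (eq_bigr _ (fun a' _ => HJ a' b i)) -mulr_sumr.
  rewrite -mulrA; congr (_ * (_ * ln _)).
  rewrite invfM mulrACA invrK mulVf ?mul1r // invr_eq0.
by rewrite sumr_const card_ord -mulrnAl -mulr_natr mulVf ?mul1r.
Qed.

Lemma kwlog (k w : R) : k * w * ln (k * w / k) = k * (w * ln w).
Proof.
have [->|k0] := eqVneq k 0; first by rewrite !mul0r.
by rewrite [k * w]mulrC mulfK // -mulrA mulrCA.
Qed.

Lemma ln_le_sub1 (x : R) : 0 < x -> ln x <= x - 1.
Proof.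
move=> x0; have := @le_ln1Dx R (x - 1).
by rewrite addrCA subrr addr0; apply; rewrite ltrBrDr addNr.
Qed.

Lemma logsum (I : finType) (p w : I -> R) :
  (forall i, 0 <= p i) -> (forall i, 0 <= w i) ->
  (\sum_i p i * w i) * ln ((\sum_i p i * w i) / \sum_i p i)
    <= \sum_i p i * (w i * ln (w i)).
Proof.
move=> p0 w0; set A := \sum_i p i * w i; set B := \sum_i p i.
have A0 : 0 <= A by apply: sumr_ge0 => i _; rewrite mulr_ge0.
have B0 : 0 <= B by apply: sumr_ge0.
have [BZ|Bn0] := eqVneq B 0.
  have pz := psumr_eq0P (fun i _ => p0 i) BZ.
  rewrite /A !big1 ?mul0r // => i _; by rewrite pz // mul0r.
have Bp : 0 < B by rewrite lt_def Bn0.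
rewrite -subr_le0.
have -> : A * ln (A / B) - \sum_i p i * (w i * ln (w i))
   = \sum_i (p i * w i * ln (A / B) - p i * (w i * ln (w i))).
  by rewrite sumrB -big_distrl.
have E0 : \sum_i (p i * (A / B) - p i * w i) = 0.
  by rewrite sumrB -big_distrl /= -/B -/A mulrC divfK // subrr.
rewrite -[X in _ <= X]E0; apply: ler_sum => i _.
have [pw0|pwn0] := eqVneq (p i * w i) 0.
  rewrite pw0 mul0r mulrA pw0 mul0r subrr subr0.
  by rewrite mulr_ge0 // divr_ge0.
have pi0 : 0 < p i by rewrite lt_def p0 andbT; apply: contraNneq pwn0 => ->; rewrite mul0r.
have wi0 : 0 < w i by rewrite lt_def w0 andbT; apply: contraNneq pwn0 => ->; rewrite mulr0.
have Ap : 0 < A.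
  rewrite lt_def A0 andbT; apply/eqP => AZ.
  have := psumr_eq0P (fun j _ => mulr_ge0 (p0 j) (w0 j)) AZ (i:=i) isT.
  by move/eqP; rewrite (negbTE pwn0).
have -> : p i * w i * ln (A / B) - p i * (w i * ln (w i)) =
          p i * w i * (ln (A / B) - ln (w i)) by ring.
rewrite -ln_div ?posrE ?divr_gt0 //.
apply: le_trans (_ : p i * w i * ((A / B) / w i - 1) <= _).
  by rewrite ler_wpM2l ?mulr_ge0 // ln_le_sub1 // !divr_gt0.
have wn0 : w i != 0 by rewrite gt_eqF.
have -> : p i * w i * (A / B / w i - 1) = p i * (A / B) - p i * w i.
  by field; rewrite Bn0 wn0.
by [].
Qed.


Lemma Hj_chan (TA TB : finType) (J : TA -> TB -> R) (k : TB -> R) (w : TB -> TA -> R) :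
  (forall b, \sum_a w b a = 1) -> (forall a b, J a b = k b * w b a) ->
  Hj J = - \sum_a \sum_b k b * (w b a * ln (w b a)).
Proof.
move=> w1 HJ; rewrite /Hj; congr (- _); apply: eq_bigr => a _; apply: eq_bigr => b _.
by rewrite (eq_bigr _ (fun a' _ => HJ a' b)) -mulr_sumr w1 mulr1 HJ kwlog.
Qed.

End Gen.

Section Spec.
Variable R : realType.
Variables (m : nat) (U V Y Z : finType).
Variable W : 'I_m -> Y -> Z -> R.
Variable pUVX : U -> V -> 'I_m -> R.
Hypothesis W_ge0 : forall x y z, 0 <= W x y z.
Hypothesis W_sum1 : forall x, \sum_(y : Y) \sum_(z : Z) W x y z = 1.
Hypothesis p_ge0 : forall u v x, 0 <= pUVX u v x.
Hypothesis m0 : (0 < m)%N.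

Lemma subm_inj_r (i : 'I_m) : injective (subm i).
Proof.
move=> j j' /(congr1 val) /= /eqP.
have hj := ltn_ord j; have hj' := ltn_ord j'.
rewrite -(addnBA i (ltnW hj)) -(addnBA i (ltnW hj')) eqn_modDl -(eqn_modDr (j + j')).
have e1 : (m - j + (j + j') = m + j')%N by rewrite addnA (subnK (ltnW hj)).
have e2 : (m - j' + (j + j') = m + j)%N by rewrite [(j + j')%N]addnC addnA (subnK (ltnW hj')).
rewrite e1 e2.
rewrite (modnDl j' m) (modnDl j m) (modn_small hj) (modn_small hj') => /eqP h.
by apply: val_inj; rewrite /= h.
Qed.

Lemma subm_inj_l (j : 'I_m) : injective (fun i => subm i j).
Proof.
move=> i i' /(congr1 val) /= /eqP.
have hj := ltn_ord j.
rewrite -(addnBA i (ltnW hj)) -(addnBA i' (ltnW hj)) eqn_modDr (modn_small (ltn_ord i)) (modn_small (ltn_ord i')) => /eqP h.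
exact: val_inj.
Qed.

Lemma sum_sub_r (i : 'I_m) (F : 'I_m -> R) : \sum_j F (subm i j) = \sum_x F x.
Proof. by rewrite [RHS](reindex_inj (subm_inj_r (i:=i))). Qed.

Lemma sum_sub_l (j : 'I_m) (F : 'I_m -> R) : \sum_i F (subm i j) = \sum_x F x.
Proof. by rewrite [RHS](reindex_inj (subm_inj_l (j:=j))). Qed.

Definition Wf (T : finType) (f : Y * Z -> T) x t :=
  \sum_y \sum_z W x y z * (f (y, z) == t)%:R.

Lemma Wf_sum1 (T : finType) (f : Y * Z -> T) x : \sum_t Wf f x t = 1.
Proof.
rewrite /Wf exchange_big /= -[RHS](W_sum1 x); apply: eq_bigr => y _.
rewrite exchange_big; apply: eq_bigr => z _ /=.
rewrite -mulr_sumr (sum_only (a0 := f (y, z))) ?eqxx ?mulr1 //.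
by move=> t; rewrite eq_sym => /negbTE ->.
Qed.

Lemma Wf_ge0 (T : finType) (f : Y * Z -> T) x t : 0 <= Wf f x t.
Proof. by apply: sumr_ge0 => y _; apply: sumr_ge0 => z _; rewrite mulr_ge0. Qed.

Lemma sumP (G : U * V * 'I_m * Y * Z -> R) :
  \sum_w orig_pmf pUVX W w * G w =
  \sum_u \sum_v \sum_x \sum_y \sum_z pUVX u v x * W x y z * G (u, v, x, y, z).
Proof. by rewrite !sum_pair. Qed.

Lemma sumPs (G : (U * 'I_m) * (V * 'I_m) * 'I_m * Y * Z -> R) :
  \sum_w star_pmf pUVX W w * G w =
  m%:R^-1 * \sum_u \sum_i \sum_v \sum_j \sum_y \sum_z
     pUVX u v (subm i j) * W (subm i j) y z * G ((u, i), (v, j), subm i j, y, z).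
Proof.
rewrite !sum_pair /= mulr_sumr; apply: eq_bigr => u _; rewrite mulr_sumr.
apply: eq_bigr => i _; rewrite sum_pair /= mulr_sumr; apply: eq_bigr => v _; rewrite mulr_sumr.
apply: eq_bigr => j _.
rewrite (sum_only (a0 := subm i j)) => [|x xn]; last first.
  by apply: big1 => y _; apply: big1 => z _; rewrite (negbTE xn) /= mulr0 !mul0r.
rewrite eqxx mulr_sumr; apply: eq_bigr => y _; rewrite mulr_sumr; apply: eq_bigr => z _.
by rewrite mulr1 !mulrA.
Qed.


Lemma jointP (T TB : finType) (f : Y * Z -> T) (g : U * V * 'I_m -> TB) t b :
  prob (orig_pmf pUVX W) (fun w => (f (w.1.2, w.2) == t) && (g w.1.1 == b)) =
  \sum_u \sum_v \sum_x pUVX u v x * Wf f x t * (g (u, v, x) == b)%:R.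
Proof.
rewrite probE sumP; apply: eq_bigr => u _; apply: eq_bigr => v _.
apply: eq_bigr => x _; rewrite /Wf mulr_sumr big_distrl; apply: eq_bigr => y _.
rewrite mulr_sumr big_distrl; apply: eq_bigr => z _ /=.
rewrite -mulnb natrM; ring.
Qed.

Lemma jointPs (T TB : finType) (f : Y * Z -> T)
    (g : (U * 'I_m) * (V * 'I_m) * 'I_m -> TB) t b :
  prob (star_pmf pUVX W) (fun w => (f (w.1.2, w.2) == t) && (g w.1.1 == b)) =
  m%:R^-1 * \sum_u \sum_i \sum_v \sum_j pUVX u v (subm i j) * Wf f (subm i j) t
     * (g ((u, i), (v, j), subm i j) == b)%:R.
Proof.
rewrite probE sumPs; congr (_ * _).
apply: eq_bigr => u _; apply: eq_bigr => i _; apply: eq_bigr => v _.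
apply: eq_bigr => j _; rewrite /Wf mulr_sumr big_distrl; apply: eq_bigr => y _.
rewrite mulr_sumr big_distrl; apply: eq_bigr => z _ /=.
rewrite -mulnb natrM; ring.
Qed.


Ltac zero H := do ? (apply: big1 => ? _); rewrite /= ?xpair_eqE (negbTE H) ?andbF /= mulr0n mulr0.

Let P := orig_pmf pUVX W.
Let Ps := star_pmf pUVX W.

Definition JU (T : finType) (f : Y * Z -> T) t u := \sum_v \sum_x pUVX u v x * Wf f x t.
Definition JV (T : finType) (f : Y * Z -> T) t v := \sum_u \sum_x pUVX u v x * Wf f x t.
Definition px x := \sum_u \sum_v pUVX u v x.

Lemma jU (T : finType) (f : Y * Z -> T) t u :
  prob P (fun w => (f (w.1.2, w.2) == t) && (w.1.1.1.1 == u)) = JU f t u.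
Proof.
rewrite (jointP f (fun k : U * V * 'I_m => k.1.1)) /=.
rewrite (sum_only (a0 := u)) => [|u' un]; last by zero un.
by apply: eq_bigr => v _; apply: eq_bigr => x _; rewrite eqxx mulr1.
Qed.

Lemma jsU (T : finType) (f : Y * Z -> T) t u i :
  prob Ps (fun w => (f (w.1.2, w.2) == t) && (w.1.1.1.1 == (u, i))) =
  m%:R^-1 * JU f t u.
Proof.
rewrite (jointPs f (fun k : (U * 'I_m) * (V * 'I_m) * 'I_m => k.1.1)) /=.
congr (_ * _).
rewrite (sum_only (a0 := u)) => [|u' un]; last by zero un.
rewrite (sum_only (a0 := i)) => [|i' iN]; last by zero iN.
apply: eq_bigr => v _; rewrite -(sum_sub_r i (fun x => pUVX u v x * Wf f x t)).
by apply: eq_bigr => j _; rewrite eqxx mulr1.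
Qed.

Lemma jV (T : finType) (f : Y * Z -> T) t v :
  prob P (fun w => (f (w.1.2, w.2) == t) && (w.1.1.1.2 == v)) = JV f t v.
Proof.
rewrite (jointP f (fun k : U * V * 'I_m => k.1.2)) /=.
apply: eq_bigr => u _.
rewrite (sum_only (a0 := v)) => [|v' vn]; last by zero vn.
by apply: eq_bigr => x _; rewrite eqxx mulr1.
Qed.

Lemma jsV (T : finType) (f : Y * Z -> T) t v j :
  prob Ps (fun w => (f (w.1.2, w.2) == t) && (w.1.1.1.2 == (v, j))) =
  m%:R^-1 * JV f t v.
Proof.
rewrite (jointPs f (fun k : (U * 'I_m) * (V * 'I_m) * 'I_m => k.1.2)) /=.
congr (_ * _); apply: eq_bigr => u _.
rewrite -(sum_sub_l j (fun x => pUVX u v x * Wf f x t)).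
apply: eq_bigr => i _.
rewrite (sum_only (a0 := v)) => [|v' vn]; last by zero vn.
rewrite (sum_only (a0 := j)) => [|j' jn]; last by zero jn.
by rewrite eqxx mulr1.
Qed.

Lemma jX (T : finType) (f : Y * Z -> T) t x :
  prob P (fun w => (f (w.1.2, w.2) == t) && (w.1.1.2 == x)) = px x * Wf f x t.
Proof.
rewrite (jointP f (fun k : U * V * 'I_m => k.2)) /= /px big_distrl.
apply: eq_bigr => u _; rewrite big_distrl; apply: eq_bigr => v _.
by rewrite (@sum_ind _ _ x (fun x => pUVX u v x * Wf f x t)).
Qed.

Lemma jsX (T : finType) (f : Y * Z -> T) t x :
  prob Ps (fun w => (f (w.1.2, w.2) == t) && (w.1.1.2 == x)) = px x * Wf f x t.
Proof.
rewrite (jointPs f (fun k : (U * 'I_m) * (V * 'I_m) * 'I_m => k.2)) /=.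
have mn0 : (m%:R : R) != 0 by rewrite pnatr_eq0 -lt0n.
transitivity (m%:R^-1 * \sum_u (\sum_v pUVX u v x * Wf f x t) *+ m).
  congr (_ * _); apply: eq_bigr => u _.
  rewrite -[X in _ *+ X](card_ord m) -sumr_const; apply: eq_bigr => i _.
  apply: eq_bigr => v _.
  by rewrite (sum_sub_r i (fun x' => pUVX u v x' * Wf f x' t * (x' == x)%:R)) sum_ind.
rewrite sumrMnl -[X in _ * X]mulr_natr mulrCA mulVf // mulr1 /px big_distrl.
by apply: eq_bigr => u _; rewrite big_distrl.
Qed.

Lemma jUV (T : finType) (f : Y * Z -> T) t u v :
  prob P (fun w => (f (w.1.2, w.2) == t) && ((w.1.1.1.1, w.1.1.1.2) == (u, v))) =
  \sum_x pUVX u v x * Wf f x t.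
Proof.
rewrite (jointP f (fun k : U * V * 'I_m => (k.1.1, k.1.2))) /=.
rewrite (sum_only (a0 := u)) => [|u' un]; last by zero un.
rewrite (sum_only (a0 := v)) => [|v' vn]; last by zero vn.
by apply: eq_bigr => x _; rewrite eqxx mulr1.
Qed.

Lemma jsUV (T : finType) (f : Y * Z -> T) t u i v j :
  prob Ps (fun w => (f (w.1.2, w.2) == t) &&
     ((w.1.1.1.1, w.1.1.1.2) == ((u, i), (v, j)))) =
  m%:R^-1 * pUVX u v (subm i j) * Wf f (subm i j) t.
Proof.
rewrite (jointPs f (fun k : (U * 'I_m) * (V * 'I_m) * 'I_m => (k.1.1, k.1.2))) /=.
rewrite -!mulrA; congr (_ * _).
rewrite (sum_only (a0 := u)) => [|u' un]; last by zero un.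
rewrite (sum_only (a0 := i)) => [|i' iN]; last by zero iN.
rewrite (sum_only (a0 := v)) => [|v' vn]; last by zero vn.
rewrite (sum_only (a0 := j)) => [|j' jn]; last by zero jn.
by rewrite eqxx mulr1.
Qed.


Lemma HU (T : finType) (f : Y * Z -> T) :
  condH Ps (fun w => f (w.1.2, w.2)) (fun w => w.1.1.1.1) =
  condH P (fun w => f (w.1.2, w.2)) (fun w => w.1.1.1.1).
Proof.
rewrite !condH_Hj; apply: (Hj_scale (m := m)) => // a b i /=.
by rewrite jsU jU.
Qed.

Lemma HV (T : finType) (f : Y * Z -> T) :
  condH Ps (fun w => f (w.1.2, w.2)) (fun w => w.1.1.1.2) =
  condH P (fun w => f (w.1.2, w.2)) (fun w => w.1.1.1.2).
Proof.
rewrite !condH_Hj; apply: (Hj_scale (m := m)) => // a b i /=.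
by rewrite jsV jV.
Qed.

Definition Hc (T : finType) (f : Y * Z -> T) :=
  - \sum_t \sum_x px x * (Wf f x t * ln (Wf f x t)).

Lemma HX (T : finType) (f : Y * Z -> T) :
  condH P (fun w => f (w.1.2, w.2)) (fun w => w.1.1.2) = Hc f.
Proof.
rewrite condH_Hj (Hj_chan (k := px) (w := fun x t => Wf f x t)) //.
  by move=> x; apply: Wf_sum1.
by move=> a b /=; rewrite jX.
Qed.

Lemma HsX (T : finType) (f : Y * Z -> T) :
  condH Ps (fun w => f (w.1.2, w.2)) (fun w => w.1.1.2) = Hc f.
Proof.
rewrite condH_Hj (Hj_chan (k := px) (w := fun x t => Wf f x t)) //.
  by move=> x; apply: Wf_sum1.
by move=> a b /=; rewrite jsX.
Qed.

Lemma HsUV (T : finType) (f : Y * Z -> T) :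
  condH Ps (fun w => f (w.1.2, w.2)) (fun w => (w.1.1.1.1, w.1.1.1.2)) = Hc f.
Proof.
have mn0 : (m%:R : R) != 0 by rewrite pnatr_eq0 -lt0n.
rewrite condH_Hj (Hj_chan
  (k := fun b : (U * 'I_m) * (V * 'I_m) => m%:R^-1 * pUVX b.1.1 b.2.1 (subm b.1.2 b.2.2))
  (w := fun b t => Wf f (subm b.1.2 b.2.2) t)); last 2 first.
- by move=> b; apply: Wf_sum1.
- by move=> a [[u i] [v j]] /=; rewrite jsUV.
rewrite /Hc; congr (- _); apply: eq_bigr => t _.
set c := fun x => Wf f x t * ln (Wf f x t).
transitivity (\sum_u \sum_v \sum_x pUVX u v x * c x).
  rewrite sum_pair sum_pair; apply: eq_bigr => u _.
  rewrite exchange_big sum_pair /=; apply: eq_bigr => v _; rewrite exchange_big /=.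
  transitivity (\sum_(i < m) m%:R^-1 * \sum_x pUVX u v x * c x).
    apply: eq_bigr => i _.
    rewrite (sum_sub_r i (fun x => m%:R^-1 * pUVX u v x * c x)) mulr_sumr.
    by apply: eq_bigr => x _; rewrite -mulrA.
  by rewrite sumr_const card_ord -mulrnAl -mulr_natr mulVf ?mul1r.
transitivity (\sum_u \sum_x \sum_v pUVX u v x * c x).
  by apply: eq_bigr => u _; rewrite exchange_big.
rewrite exchange_big; apply: eq_bigr => x _; rewrite /px big_distrl.
by apply: eq_bigr => u _; rewrite big_distrl.
Qed.

Lemma HXle (T : finType) (f : Y * Z -> T) :
  condH P (fun w => f (w.1.2, w.2)) (fun w => w.1.1.2) <=
  condH P (fun w => f (w.1.2, w.2)) (fun w => (w.1.1.1.1, w.1.1.1.2)).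
Proof.
rewrite HX condH_Hj.
have -> : (fun a (b : U * V) => prob P (fun w => (f (w.1.2, w.2) == a) &&
            ((w.1.1.1.1, w.1.1.1.2) == b))) =
          (fun t (b : U * V) => \sum_x pUVX b.1 b.2 x * Wf f x t).
  by apply/funext => t; apply/funext => -[u v]; rewrite jUV.
rewrite /Hc /Hj lerN2; apply: ler_sum => t _.
rewrite (_ : \sum_x px x * _ =
   \sum_(b : U * V) \sum_x pUVX b.1 b.2 x * (Wf f x t * ln (Wf f x t))); last first.
  rewrite exchange_big; apply: eq_bigr => x _; rewrite /px big_distrl sum_pair.
  by apply: eq_bigr => u _; rewrite big_distrl.
apply: ler_sum => b _.
rewrite (_ : \sum_t' \sum_x pUVX b.1 b.2 x * Wf f x t' = \sum_x pUVX b.1 b.2 x); last first.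
  rewrite exchange_big; apply: eq_bigr => x _.
  by rewrite -mulr_sumr Wf_sum1 mulr1.
exact: (logsum (p := fun x => pUVX b.1 b.2 x) (w := fun x => Wf f x t)
  (fun x => p_ge0 _ _ x) (fun x => Wf_ge0 f x t)).
Qed.

Lemma probX (i : 'I_m) :
  prob Ps (fun w => w.1.1.2 == i) = prob P (fun w => w.1.1.2 == i).
Proof.
rewrite (marg Ps (fun w => w.1.2) (fun w => w.1.1.2)).
rewrite (marg P (fun w => w.1.2) (fun w => w.1.1.2)).
apply: eq_bigr => y _.
by rewrite (jsX (fun p : Y * Z => p.1)) (jX (fun p : Y * Z => p.1)).
Qed.

End Spec.

Unset Implicit Arguments. Set Strict Implicit.

Theorem corollary3p4 (R : realType) (m : nat) (U V Y Z : finType)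
    (W : 'I_m -> Y -> Z -> R)
    (W_ge0 : forall x y z, 0 <= W x y z)
    (W_sum1 : forall x, \sum_(y : Y) \sum_(z : Z) W x y z = 1)
    (pUVX : U -> V -> 'I_m -> R)
    (p_ge0 : forall u v x, 0 <= pUVX u v x)
    (p_sum1 : \sum_(u : U) \sum_(v : V) \sum_(x : 'I_m) pUVX u v x = 1) :
  let P := orig_pmf pUVX W in
  let Ps := star_pmf pUVX W in
  let RU := fun w : U * V * 'I_m * Y * Z => w.1.1.1.1 in
  let RV := fun w : U * V * 'I_m * Y * Z => w.1.1.1.2 in
  let RX := fun w : U * V * 'I_m * Y * Z => w.1.1.2 in
  let RY := fun w : U * V * 'I_m * Y * Z => w.1.2 in
  let RZ := fun w : U * V * 'I_m * Y * Z => w.2 in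
  let RUs := fun w : (U * 'I_m) * (V * 'I_m) * 'I_m * Y * Z => w.1.1.1.1 in
  let RVs := fun w : (U * 'I_m) * (V * 'I_m) * 'I_m * Y * Z => w.1.1.1.2 in
  let RXs := fun w : (U * 'I_m) * (V * 'I_m) * 'I_m * Y * Z => w.1.1.2 in
  let RYs := fun w : (U * 'I_m) * (V * 'I_m) * 'I_m * Y * Z => w.1.2 in
  let RZs := fun w : (U * 'I_m) * (V * 'I_m) * 'I_m * Y * Z => w.2 in
  (* (i) *)
  (forall i : 'I_m, prob Ps (fun w => RXs w == i) = prob P (fun w => RX w == i)) /\
  (* (ii) - (v) *)
  condH Ps RYs RUs = condH P RY RU /\
  condH Ps RZs RUs = condH P RZ RU /\
  condH Ps RYs RVs = condH P RY RV /\
  condH Ps RZs RVs = condH P RZ RV /\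
  (* (vi) *)
  (condH Ps RYs (fun w => (RUs w, RVs w)) = condH Ps RYs RXs /\
   condH Ps RYs RXs = condH P RY RX /\
   condH P RY RX <= condH P RY (fun w => (RU w, RV w))) /\
  (* (vii) *)
  (condH Ps RZs (fun w => (RUs w, RVs w)) = condH Ps RZs RXs /\
   condH Ps RZs RXs = condH P RZ RX /\
   condH P RZ RX <= condH P RZ (fun w => (RU w, RV w))).
Proof.
have m0 : (0 < m)%N.
  case: (posnP m) => // m0'; exfalso.
  have : \sum_(u : U) \sum_(v : V) \sum_(x : 'I_m) pUVX u v x = 0.
    apply: big1 => u _; apply: big1 => v _; apply: big1 => -[x hx] _.
    by exfalso; move: hx; rewrite m0'.
  by rewrite p_sum1 => /eqP; rewrite oner_eq0.
move=> P Ps RU RV RX RY RZ RUs RVs RXs RYs RZs.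
rewrite /P /Ps /RU /RV /RX /RY /RZ /RUs /RVs /RXs /RYs /RZs /=.
split; first by move=> i; exact: (probX W pUVX m0 i).
split; first exact: (HU W pUVX m0 (fun p : Y * Z => p.1)).
split; first exact: (HU W pUVX m0 (fun p : Y * Z => p.2)).
split; first exact: (HV W pUVX m0 (fun p : Y * Z => p.1)).
split; first exact: (HV W pUVX m0 (fun p : Y * Z => p.2)).
split.
  split; first by rewrite (HsUV pUVX W_sum1 m0 (fun p : Y * Z => p.1)) (HsX pUVX W_sum1 m0 (fun p : Y * Z => p.1)).
  split; first by rewrite (HsX pUVX W_sum1 m0 (fun p : Y * Z => p.1)) (HX pUVX W_sum1 (fun p : Y * Z => p.1)).
  exact: (HXle W_ge0 W_sum1 p_ge0 (fun p : Y * Z => p.1)).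
split; first by rewrite (HsUV pUVX W_sum1 m0 (fun p : Y * Z => p.2)) (HsX pUVX W_sum1 m0 (fun p : Y * Z => p.2)).
split; first by rewrite (HsX pUVX W_sum1 m0 (fun p : Y * Z => p.2)) (HX pUVX W_sum1 (fun p : Y * Z => p.2)).
exact: (HXle W_ge0 W_sum1 p_ge0 (fun p : Y * Z => p.2)).
Qed.
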